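(* Suppose there exists a constant $C$ such that for all positive integers $k$ we have $\mathrm{LCS}_2(2k,\mathcal P_k)\leq Ck^{1/3}$. Then for all $k\geq 2$, $\mathrm{LT}(k,n)\leq 6Ck^{-2/3}n+o(n)$ as $n\to\infty$.
   Context: $\mathcal{P}_k$ is the set of permutations on $k$ letters (words over $[k]=\{1,\dots,k\}$ in which each letter occurs exactly once). $\mathrm{LCS}(w,w')$ is the length of a longest common subsequence of words $w,w'$; $\mathrm{LCS}_2(t,\mathcal P_k)$ is the minimum, over sets of $t$ distinct permutations in $\mathcal P_k$, of the maximum $\mathrm{LCS}$ of two distinct members. Two subsequences of a word $w$ are twins if they are equal as words and use disjoint sets of positions of $w$; $\mathrm{LT}(w)$ is the maximum length of twins in $w$ and $\mathrm{LT}(k,n)=\min_{w\in[k]^n}\mathrm{LT}(w)$. *)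

(* Defs.v *)
From HB Require Import structures.
From mathcomp Require Import all_boot all_order all_algebra all_fingroup.
From mathcomp Require Import all_classical all_reals all_analysis.
Set Implicit Arguments. Unset Strict Implicit. Unset Printing Implicit Defensive.
Import Order.TTheory GRing.Theory Num.Theory.

(* Words over the alphabet [k] are sequences of letters in 'I_k
   (letters 0..k-1 instead of 1..k; irrelevant). *)

Definition LCS (T : eqType) (w w' : seq T) : nat :=
  \max_(m : (size w).-tuple bool | subseq (mask m w) w') size (mask m w).

Definition perm_word (k : nat) (p : 'S_k) : seq 'I_k :=
  [seq p i | i <- enum 'I_k].

Definition maxLCS (k : nat) (S : {set 'S_k}) : nat :=
  \max_(p in S) \max_(q in S | p != q) LCS (perm_word p) (perm_word q).

(* LCS_2(t, P_k): minimum over sets of t distinct permutations of maxLCS.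
   (When no such set exists, i.e. t > k!, the default value k is returned;
   the theorem only uses LCS2 when t <= k!.) *)
Definition LCS2 (t k : nat) : nat :=
  \big[minn/k]_(S : {set 'S_k} | #|S| == t) maxLCS S.

(* Twins in w : two equal subsequences using disjoint position sets. *)
Definition LTw (T : eqType) (w : seq T) : nat :=
  \max_(m1 : (size w).-tuple bool | [exists m2 : (size w).-tuple bool,
          [forall i : 'I_(size w), ~~ (tnth m1 i && tnth m2 i)]
          && (mask m1 w == mask m2 w)]) size (mask m1 w).

Definition LT (k n : nat) : nat :=
  \big[minn/n]_(w : n.-tuple 'I_k) LTw (tval w).

(* Main.v *)
Require Import Defs.
From HB Require Import structures.
From mathcomp Require Import all_boot all_order all_algebra all_fingroup.
From mathcomp Require Import all_classical all_reals all_analysis.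
From mathcomp Require Import ring lra zify.
Import Order.TTheory GRing.Theory Num.Theory.
Set Implicit Arguments. Unset Strict Implicit. Unset Printing Implicit Defensive.

Section Tw.
Variable X : eqType.
Variable x0 : X.

Definition Tw (w : seq X) (T : seq (nat * nat)) : bool :=
  [&& sorted ltn (unzip1 T), sorted ltn (unzip2 T),
      all (fun u => [&& u.1 < size w, u.2 < size w & nth x0 w u.1 == nth x0 w u.2]) T
    & all (fun u => u.1 \notin unzip2 T) T].

Lemma mask_iota_filter (m : bitseq) a :
  mask m (iota a (size m)) = seq.filter (fun i => nth false m (i - a)) (iota a (size m)).
Proof.
elim: m a => [|b m IH] a //=.
rewrite subnn /= IH; case: b => /=.
  congr cons; apply: eq_in_filter => i; rewrite mem_iota => /andP[hi _].
  by rewrite (_ : i - a = (i - a.+1).+1) //; rewrite subnSK.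
apply: eq_in_filter => i; rewrite mem_iota => /andP[hi _].
by rewrite (_ : i - a = (i - a.+1).+1) //; rewrite subnSK.
Qed.

Lemma mask_nth (m : bitseq) (s : seq X) :
  size m = size s -> mask m s = map (nth x0 s) (mask m (iota 0 (size s))).
Proof.
move=> hs; rewrite map_mask.
by rewrite -/(mkseq (nth x0 s) (size s)) mkseq_nth.
Qed.

Lemma filter_iota_sorted (I : seq nat) n :
  sorted ltn I -> all (fun i => i < n) I -> seq.filter (mem I) (iota 0 n) = I.
Proof.
move=> sI aI; apply: (irr_sorted_eq ltn_trans ltnn).
- by apply: sorted_filter => //; [exact: ltn_trans | exact: iota_ltn_sorted].
- by [].
move=> i; rewrite mem_filter mem_iota /= add0n.
case hi: (i \in I) => //=.
by move/allP: aI => /(_ _ hi).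
Qed.

Lemma mask_idx (s : seq X) (I : seq nat) :
  sorted ltn I -> all (fun i => i < size s) I ->
  mask [seq i \in I | i <- iota 0 (size s)] s = map (nth x0 s) I.
Proof.
move=> sI aI; rewrite mask_nth; last by rewrite size_map size_iota.
by rewrite -filter_mask filter_iota_sorted.
Qed.

Lemma subseq_idx (s : seq X) (I : seq nat) :
  sorted ltn I -> all (fun i => i < size s) I -> subseq (map (nth x0 s) I) s.
Proof. by move=> sI aI; rewrite -mask_idx // mask_subseq. Qed.

Lemma LTw_ge (w : seq X) T : Tw w T -> size T <= LTw w.
Proof.
case/and4P=> s1 s2 aT dT.
have a1 : all (fun i => i < size w) (unzip1 T).
  by rewrite all_map; apply: sub_all aT => u /and3P[].
have a2 : all (fun i => i < size w) (unzip2 T).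
  by rewrite all_map; apply: sub_all aT => u /and3P[].
have sz : size [seq i \in unzip1 T | i <- iota 0 (size w)] == size w.
  by rewrite size_map size_iota.
have sz2 : size [seq i \in unzip2 T | i <- iota 0 (size w)] == size w.
  by rewrite size_map size_iota.
pose m1 := Tuple sz; pose m2 := Tuple sz2.
have e1 : mask m1 w = map (nth x0 w) (unzip1 T) by rewrite /= mask_idx.
have e2 : mask m2 w = map (nth x0 w) (unzip2 T) by rewrite /= mask_idx.
have -> : size T = size (mask m1 w) by rewrite e1 size_map size_map.
apply: (leq_bigmax_cond (P := fun m1 : (size w).-tuple bool => [exists m2 : (size w).-tuple bool,
          [forall i : 'I_(size w), ~~ (tnth m1 i && tnth m2 i)]
          && (mask m1 w == mask m2 w)]) (F := fun m1 => size (mask m1 w))).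
apply/existsP; exists m2; apply/andP; split.
  apply/forallP => i; rewrite !(tnth_nth false) /= !(nth_map 0) ?size_iota //.
  rewrite nth_iota // add0n; apply/negP => /andP[h1 h2].
  case/mapP: h1 => u uT ei; move/allP: dT => /(_ u uT); by rewrite -ei h2.
rewrite e1 e2; apply/eqP.
apply: (@eq_from_nth _ x0); first by rewrite !size_map.
move=> i; rewrite size_map size_map => hi.
rewrite (nth_map 0) ?size_map // (nth_map 0) ?size_map //.
rewrite !(nth_map (0,0)) //.
by move/all_nthP: aT => /(_ (0,0) i hi) /and3P[_ _ /eqP].
Qed.


Lemma mem_mask_iota (m : bitseq) i : i \in mask m (iota 0 (size m)) -> nth false m i.
Proof.
rewrite mask_iota_filter mem_filter subn0; by case/andP.
Qed.

Lemma LTw_le (w : seq X) B : (forall T, Tw w T -> size T <= B) -> LTw w <= B.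
Proof.
move=> H; apply/bigmax_leqP => m1 /existsP[m2 /andP[/forallP dis /eqP me]].
set n := size w.
pose P := mask m1 (iota 0 n); pose Q := mask m2 (iota 0 n).
have e1 : mask m1 w = map (nth x0 w) P by rewrite mask_nth // size_tuple.
have e2 : mask m2 w = map (nth x0 w) Q by rewrite mask_nth // size_tuple.
have sPQ : size P = size Q.
  by have := congr1 size me; rewrite e1 e2 !size_map.
have u1 : unzip1 (zip P Q) = P by rewrite unzip1_zip // sPQ.
have u2 : unzip2 (zip P Q) = Q by rewrite unzip2_zip // sPQ.
have sP : sorted ltn P by apply: (subseq_sorted ltn_trans (mask_subseq _ _)); exact: iota_ltn_sorted.
have sQ : sorted ltn Q by apply: (subseq_sorted ltn_trans (mask_subseq _ _)); exact: iota_ltn_sorted.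
have -> : size (mask m1 w) = size (zip P Q) by rewrite size_zip e1 size_map sPQ minnn.
apply: H; apply/and4P; split; rewrite ?u1 ?u2 //.
- apply/(all_nthP (0,0)) => i; rewrite size_zip sPQ minnn => hi.
  rewrite nth_zip //=.
  have hP : nth 0 P i < n.
    have : nth 0 P i \in P by rewrite mem_nth // sPQ.
    by move/mem_subseq: (mask_subseq m1 (iota 0 n)) => h /h; rewrite mem_iota.
  have hQ : nth 0 Q i < n.
    have : nth 0 Q i \in Q by rewrite mem_nth.
    by move/mem_subseq: (mask_subseq m2 (iota 0 n)) => h /h; rewrite mem_iota.
  rewrite hP hQ /=.
  have := congr1 (nth x0 ^~ i) me; rewrite e1 e2 (nth_map 0) ?sPQ // (nth_map 0) // => ->.
  by [].
- apply/allP => v vz; apply/negP => hq.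
  have hp : v.1 \in P by rewrite -u1; apply: map_f.
  have b1 : nth false m1 v.1 by apply: mem_mask_iota; rewrite size_tuple.
  have b2 : nth false m2 v.1 by apply: mem_mask_iota; rewrite size_tuple.
  have vn : v.1 < n.
    by move/mem_subseq: (mask_subseq m1 (iota 0 n)) => h; move/h: hp; rewrite mem_iota.
  have := dis (Ordinal vn); by rewrite !(tnth_nth false) /= b1 b2.
Qed.


Lemma Tw_filter (w : seq X) T (p : pred (nat * nat)) : Tw w T -> Tw w (seq.filter p T).
Proof.
case/and4P=> s1 s2 aT dT; apply/and4P; split.
- apply: (subseq_sorted ltn_trans _ s1); apply: map_subseq; exact: filter_subseq.
- apply: (subseq_sorted ltn_trans _ s2); apply: map_subseq; exact: filter_subseq.
- by rewrite all_filter; apply: sub_all aT => u hu; apply/implyP.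
- apply/allP => u; rewrite mem_filter => /andP[_ uT].
  apply/negP => h; move/allP: dT => /(_ u uT) /negP; apply.
  by apply: (mem_subseq (map_subseq _ (filter_subseq p T))).
Qed.

Lemma LTw_uniq (w : seq X) : uniq w -> LTw w = 0.
Proof.
move=> uw; apply/eqP; rewrite -leqn0; apply: LTw_le => -[|u T] //.
case/and4P=> _ _ /andP[/and3P[h1 h2 he] _] /andP[d _].
exfalso; move: he; rewrite (nth_uniq x0 h1 h2 uw) => /eqP e.
by move: d; rewrite /= e inE eqxx.
Qed.

Lemma LTw_size (w : seq X) : LTw w <= size w.
Proof.
by apply/bigmax_leqP => m _; apply: size_subseq; exact: mask_subseq.
Qed.

Lemma LTw_take (w : seq X) n : LTw (take n w) <= LTw w.
Proof.
apply: LTw_le => T /and4P[s1 s2 aT dT]; apply: LTw_ge; apply/and4P; split => //.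
apply: sub_all aT => u /and3P[h1 h2 he]; rewrite size_take in h1 h2.
have l1 : u.1 < size w by apply: leq_trans h1 (geq_minr _ _).
have l2 : u.2 < size w by apply: leq_trans h2 (geq_minr _ _).
rewrite l1 l2 /=; move: he; rewrite !nth_take //.
  by apply: leq_trans h2 (geq_minl _ _).
by apply: leq_trans h1 (geq_minl _ _).
Qed.

Lemma LCS_ge (s u v : seq X) : subseq s u -> subseq s v -> size s <= LCS u v.
Proof.
case/subseqP => m sm -> hv.
have sz : size m == size u by rewrite sm.
apply: (leq_trans _ (leq_bigmax_cond (P := fun m : (size u).-tuple bool => subseq (mask m u) v)
   (F := fun m => size (mask m u)) (Tuple sz) hv)) => //.
Qed.

Lemma LCS_le (u v : seq X) : LCS u v <= size u.
Proof.
by apply/bigmax_leqP => m _; apply: size_subseq; exact: mask_subseq.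
Qed.

End Tw.

Lemma divlt k a b : a < b -> a %% k = b %% k -> a %/ k < b %/ k.
Proof.
move=> ab em; rewrite ltnNge; apply/negP => h.
have h2 : b %/ k * k <= a %/ k * k by rewrite leq_mul2r h orbT.
have ea := divn_eq a k; have eb := divn_eq b k; rewrite em in ea.
move: ab h2 ea eb; generalize (a %/ k) (b %/ k) (b %% k) => qa qb r.
generalize (qa * k) (qb * k) => x y; lia.
Qed.

Lemma modlt k a b : a < b -> a %/ k = b %/ k -> a %% k < b %% k.
Proof.
move=> ab em; have ea := divn_eq a k; have eb := divn_eq b k; rewrite em in ea.
move: ab ea eb; generalize (a %% k) (b %% k) (b %/ k * k) => x y z; lia.
Qed.

Lemma divmod_eq k a b : a %/ k = b %/ k -> a %% k = b %% k -> a = b.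
Proof. by move=> e1 e2; rewrite (divn_eq a k) (divn_eq b k) e1 e2. Qed.

Lemma cnt_split (T : Type) (s : seq T) (f : T -> nat) n (P : pred T) :
  all (fun u => f u < n) s ->
  count P s <= \sum_(j < n) count (fun u => P u && (f u == j)) s.
Proof.
elim: s => [|u s IH] /=; first by rewrite big1.
case/andP=> hu hs; rewrite big_split /=; apply: leq_add; last exact: IH.
case: (P u) => //; rewrite (bigD1 (Ordinal hu)) //= eqxx; exact: leq_addr.
Qed.

Lemma size_pw k (p : 'S_k) : size (perm_word p) = k.
Proof. by rewrite size_map size_enum_ord. Qed.

Lemma uniq_pw k (p : 'S_k) : uniq (perm_word p).
Proof. by rewrite map_inj_uniq ?enum_uniq //; exact: perm_inj. Qed.

Lemma pw_inj k (p : 'S_k) y0 o1 o2 : o1 < k -> o2 < k ->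
  nth y0 (perm_word p) o1 = nth y0 (perm_word p) o2 -> o1 = o2.
Proof.
move=> h1 h2 /eqP; rewrite nth_uniq ?size_pw ?uniq_pw //; exact/eqP.
Qed.

Section Comp.
Variables (k t : nat) (sg : 'I_t -> 'S_k) (L : nat) (a0 : 'I_t) (y0 : 'I_k).
Hypothesis Hsg : forall a b, a != b -> LCS (perm_word (sg a)) (perm_word (sg b)) <= L.
Hypothesis kpos : 0 < k.

Definition blockw (x : seq 'I_t) := flatten [seq perm_word (sg a) | a <- x].

Lemma size_blockw x : size (blockw x) = k * size x.
Proof.
elim: x => [|a x IH]; first by rewrite muln0.
by rewrite /blockw /= size_cat -/(blockw x) IH size_pw mulnS.
Qed.

Lemma nth_blockw x a o : a < size x -> o < k ->
  nth y0 (blockw x) (a * k + o) = nth y0 (perm_word (sg (nth a0 x a))) o.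
Proof.
elim: x a => [|b x IH] a //= ha ho.
rewrite /blockw /= nth_cat size_pw -/(blockw x).
case: a ha => [|a] ha; first by rewrite mul0n add0n ho.
rewrite mulSn -addnA ltnNge leq_addr /= addKn IH //.
Qed.

Lemma nth_blockw' x i : i < k * size x ->
  nth y0 (blockw x) i = nth y0 (perm_word (sg (nth a0 x (i %/ k)))) (i %% k).
Proof.
move=> hi; rewrite {1}(divn_eq i k) nth_blockw ?ltn_mod //.
by rewrite ltn_divLR // mulnC.
Qed.

Lemma compose x : LTw (blockw x) <= 2 * size x * L + k * LTw x.
Proof.
apply: (@LTw_le _ y0) => T hT.
have [s1 s2 aT dT] := and4P hT.
pose lab := fun i => nth a0 x (i %/ k).
have memT u : u \in T -> [/\ u.1 < k * size x, u.2 < k * size x &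
     nth y0 (blockw x) u.1 = nth y0 (blockw x) u.2].
  move=> uT; move/allP: aT => /(_ u uT) /and3P[h1 h2 /eqP h3].
  by rewrite -size_blockw.
have divlt1 i : i < k * size x -> i %/ k < size x.
  by move=> hi; rewrite ltn_divLR // mulnC.
have offs u : u \in T -> lab u.1 == lab u.2 -> u.1 %% k = u.2 %% k.
  move=> uT /eqP el; have [h1 h2 h3] := memT u uT.
  move: h3; rewrite !nth_blockw' // -/(lab u.1) -/(lab u.2) el.
  by apply: pw_inj; rewrite ltn_mod.
rewrite -(count_predC (fun u => lab u.1 == lab u.2)) addnC.
apply: leq_add.
-
  apply: leq_trans (cnt_split (f := fun u => u.1 %/ k + u.2 %/ k) (n := 2 * size x) _ _) _.
    apply/allP => u uT; have [h1 h2 _] := memT u uT.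
    have := divlt1 _ h1; have := divlt1 _ h2; lia.
  apply: (@leq_trans (\sum_(j < 2 * size x) L)); last by rewrite sum_nat_const card_ord.
  apply: leq_sum => j _.
  rewrite -size_filter.
  set U := seq.filter _ T.
  have hU : Tw y0 (blockw x) U := Tw_filter _ hT.
  have memU u : u \in U -> [/\ u \in T, lab u.1 != lab u.2 & u.1 %/ k + u.2 %/ k = j].
    by rewrite mem_filter => /andP[/andP[e /eqP o] uT]; split.
  have [t1 t2 _ _] := and4P hU.
  case eU: U => [|u0 rest] //.
  have u0U : u0 \in U by rewrite eU mem_head.
  have blk v : v \in U -> v.1 %/ k = u0.1 %/ k /\ v.2 %/ k = u0.2 %/ k.
    rewrite eU inE => /orP[/eqP -> //|vr].
    move: t1 t2; rewrite eU /= => /(order_path_min ltn_trans) /allP h1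
       /(order_path_min ltn_trans) /allP h2.
    have l1 := leq_div2r k (ltnW (h1 _ (map_f _ vr))).
    have l2 := leq_div2r k (ltnW (h2 _ (map_f _ vr))).
    have vU : v \in U by rewrite eU inE vr orbT.
    have [_ _ e1] := memU v vU.
    have [_ _ e2] := memU u0 u0U.
    move: l1 l2 e1 e2 => /=; lia.
  set a := u0.1 %/ k; set b := u0.2 %/ k.
  have [u0T ne _] := memU u0 u0U.
  have [h01 h02 _] := memT u0 u0T.
  set A := perm_word (sg (nth a0 x a)); set B := perm_word (sg (nth a0 x b)).
  have eA : map (nth y0 A) (map (modn^~ k) (unzip1 U)) = map (fun u => nth y0 (blockw x) u.1) U.
    rewrite /unzip1 /unzip2 -!map_comp; apply/eq_in_map => v vU /=.
    have [vT _ _] := memU v vU; have [h1 _ _] := memT v vT.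
    by rewrite nth_blockw' // (blk v vU).1.
  have eB : map (nth y0 B) (map (modn^~ k) (unzip2 U)) = map (fun u => nth y0 (blockw x) u.2) U.
    rewrite /unzip1 /unzip2 -!map_comp; apply/eq_in_map => v vU /=.
    have [vT _ _] := memU v vU; have [_ h2 _] := memT v vT.
    by rewrite nth_blockw' // (blk v vU).2.
  have eAB : map (fun u => nth y0 (blockw x) u.1) U = map (fun u => nth y0 (blockw x) u.2) U.
    apply/eq_in_map => v vU; have [vT _ _] := memU v vU; by have [_ _ ->] := memT v vT.
  have sA : subseq (map (nth y0 A) (map (modn^~ k) (unzip1 U))) A.
    apply: subseq_idx.
      apply: (homo_sorted_in (P := fun i => i %/ k == a)) t1.
        move=> c d /eqP hc /eqP hd cd; apply: modlt => //; by rewrite hc hd.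
      by apply/allP => i /mapP[u uU ->]; rewrite (blk u uU).1.
    by apply/allP => i /mapP[u uU ->]; rewrite size_pw ltn_mod.
  have sB : subseq (map (nth y0 B) (map (modn^~ k) (unzip2 U))) B.
    apply: subseq_idx.
      apply: (homo_sorted_in (P := fun i => i %/ k == b)) t2.
        move=> c d /eqP hc /eqP hd cd; apply: modlt => //; by rewrite hc hd.
      by apply/allP => i /mapP[u uU ->]; rewrite (blk u uU).2.
    by apply/allP => i /mapP[u uU ->]; rewrite size_pw ltn_mod.
  rewrite -eU.
  have -> : size U = size (map (nth y0 A) (map (modn^~ k) (unzip1 U))) by rewrite !size_map.
  apply: leq_trans (Hsg ne).
  apply: LCS_ge => //; by rewrite eA eAB -eB.
-
  apply: leq_trans (cnt_split (f := fun u => u.1 %% k) (n := k) _ _) _.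
    by apply/allP => u _; rewrite ltn_mod.
  apply: (@leq_trans (\sum_(j < k) LTw x)); last by rewrite sum_nat_const card_ord.
  apply: leq_sum => j _.
  rewrite -size_filter.
  set Tj := seq.filter _ T.
  have hTj : Tw y0 (blockw x) Tj := Tw_filter _ hT.
  have memTj u : u \in Tj -> [/\ u \in T, lab u.1 == lab u.2, u.1 %% k = j & u.2 %% k = j].
    rewrite mem_filter => /andP[/andP[e /eqP o] uT]; split => //.
    by rewrite -(offs u uT e).
  have [t1 t2 _ _] := and4P hTj.
  rewrite -(size_map (fun u => (u.1 %/ k, u.2 %/ k)) Tj).
  apply: (@LTw_ge _ a0); apply/and4P; split.
  - have -> : unzip1 [seq (u.1 %/ k, u.2 %/ k) | u <- Tj] = map (divn^~ k) (unzip1 Tj).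
      by rewrite /unzip1 -!map_comp.
    apply: (homo_sorted_in (P := fun i => i %% k == j)) t1.
      move=> a b /eqP ha /eqP hb ab; apply: divlt => //; by rewrite ha hb.
    by apply/allP => i /mapP[u uT ->]; have [_ _ -> _] := memTj u uT.
  - have -> : unzip2 [seq (u.1 %/ k, u.2 %/ k) | u <- Tj] = map (divn^~ k) (unzip2 Tj).
      by rewrite /unzip2 -!map_comp.
    apply: (homo_sorted_in (P := fun i => i %% k == j)) t2.
      move=> a b /eqP ha /eqP hb ab; apply: divlt => //; by rewrite ha hb.
    by apply/allP => i /mapP[u uT ->]; have [_ _ _ ->] := memTj u uT.
  - apply/allP => v /mapP[u uTj ->] /=.
    have [uT e _ _] := memTj u uTj; have [h1 h2 _] := memT u uT.
    by rewrite !divlt1.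
  - apply/allP => v /mapP[u uTj ->] /=; apply/negP => /mapP[v' /mapP[u' uTj' ->] /= ev].
    have [uT _ o1 _] := memTj u uTj; have [u'T _ _ o2] := memTj u' uTj'.
    have e : u.1 = u'.2 by apply: (divmod_eq ev); rewrite o1 o2.
    move/allP: dT => /(_ u uT); rewrite e => /negP; apply; exact: map_f.
Qed.
End Comp.

Lemma maxLCS_le k (S : {set 'S_k}) : maxLCS S <= k.
Proof.
apply/bigmax_leqP => p _; apply/bigmax_leqP => q _.
by apply: leq_trans (LCS_le _ _) _; rewrite size_pw.
Qed.

Lemma maxLCS_ge k (S : {set 'S_k}) p q : p \in S -> q \in S -> p != q ->
  LCS (perm_word p) (perm_word q) <= maxLCS S.
Proof.
move=> pS qS pq; rewrite /maxLCS.
have h1 := leq_bigmax_cond (P := fun p => p \in S) (F := fun p => \max_(q in S | p != q) LCS (perm_word p) (perm_word q)) p pS.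
apply: leq_trans h1.
by apply: (leq_bigmax_cond (F := fun q => LCS (perm_word p) (perm_word q))); rewrite qS.
Qed.

Lemma exists_set k t : t <= k`! -> exists S : {set 'S_k}, #|S| = t.
Proof.
move=> ht; exists [set p in take t (enum 'S_k)].
have u : uniq (take t (enum 'S_k)) by rewrite take_uniq // enum_uniq.
rewrite cardsE (card_uniqP u).
by rewrite size_takel // -cardE card_Sn.
Qed.

Lemma LCS2_opt k t : t <= k`! -> exists S : {set 'S_k}, #|S| = t /\ maxLCS S <= LCS2 t k.
Proof.
move=> ht; rewrite /LCS2.
apply: (big_ind (fun v => exists S : {set 'S_k}, #|S| = t /\ maxLCS S <= v)).
- by have [S hS] := exists_set ht; exists S; split => //; exact: maxLCS_le.
- move=> a b [S1 [h1 l1]] [S2 [h2 l2]] /=; case: (leqP a b) => ab.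
    by exists S1.
  by exists S2.
- by move=> S /eqP hS; exists S.
Qed.

Lemma bigmin_seq_le (I : eqType) (r : seq I) (F : I -> nat) x0 i :
  i \in r -> \big[minn/x0]_(j <- r) F j <= F i.
Proof.
elim: r => [|j r IH] //; rewrite big_cons inE => /orP[/eqP ->|ir].
  exact: geq_minl.
by apply: leq_trans (geq_minr _ _) (IH ir).
Qed.

Lemma LT_le k n (w : n.-tuple 'I_k) : LT k n <= LTw w.
Proof.
rewrite /LT; apply: bigmin_seq_le; exact: mem_index_enum.
Qed.

Lemma LT_opt t m (a0 : 'I_t) : exists x : m.-tuple 'I_t, LTw x <= LT t m.
Proof.
rewrite /LT; apply: (big_ind (fun v => exists x : m.-tuple 'I_t, LTw x <= v)).
- by exists (nseq_tuple m a0); apply: leq_trans (LTw_size _) _; rewrite size_tuple.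
- move=> a b [S1 l1] [S2 l2] /=; case: (leqP a b) => ab.
    by exists S1.
  by exists S2.
- by move=> x _; exists x.
Qed.

Lemma LT_size k n : LT k n <= n.
Proof.
rewrite /LT; apply: (big_ind (fun v => v <= n)) => //.
  by move=> a b ha hb; rewrite geq_min ha.
by move=> w _; apply: leq_trans (LTw_size _) _; rewrite size_tuple.
Qed.

Lemma LT_small k n : n <= k -> LT k n = 0.
Proof.
move=> nk; apply/eqP; rewrite -leqn0.
case: n nk => [|n] nk; first exact: LT_size.
have y : 'I_k := Ordinal (leq_trans (ltn0Sn n) nk).
have sz : size (take n.+1 (perm_word (1 : 'S_k))) == n.+1 by rewrite size_takel // size_pw.
apply: leq_trans (LT_le (Tuple sz)) _.
by rewrite /= (LTw_uniq y (take_uniq _ (uniq_pw _))).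
Qed.

Lemma LCS2_ge1 k t : 2 <= t -> 0 < k -> (forall S : {set 'S_k}, #|S| = t -> 1 <= maxLCS S) ->
  1 <= LCS2 t k.
Proof.
move=> ht hk H; rewrite /LCS2.
apply: (big_ind (fun v => 1 <= v)) => //; first by move=> a b ha hb; rewrite leq_min ha hb.
by move=> S /eqP /H.
Qed.

Lemma maxLCS_ge1 k (S : {set 'S_k}) : 1 < #|S| -> 0 < k -> 1 <= maxLCS S.
Proof.
case/card_gt1P => p [q [pS qS pq]] hk.
apply: leq_trans (maxLCS_ge pS qS pq).
pose y : 'I_k := Ordinal hk.
have -> : 1 = size [:: p y] by [].
apply: LCS_ge; rewrite sub1seq.
  by apply: map_f; rewrite mem_enum.
by rewrite -(permKV q (p y)); apply: map_f; rewrite mem_enum.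
Qed.

Lemma fact_2k k : 3 <= k -> 2 * k <= k`!.
Proof.
case: k => [|[|[|k]]] // _.
rewrite factS [2 * _]mulnC leq_mul2l /= factS.
by apply: leq_trans (_ : 2 <= k.+2) _ => //; rewrite leq_pmulr // fact_gt0.
Qed.

Lemma LT_rec k n : 3 <= k ->
  LT k n <= 2 * (n %/ k).+1 * LCS2 (2 * k) k + k * LT (2 * k) (n %/ k).+1.
Proof.
move=> hk; have kpos : 0 < k by apply: leq_trans hk.
have [S [hS hL]] := LCS2_opt (fact_2k hk).
set m := (n %/ k).+1; set Lam := LCS2 (2 * k) k.
have t0 : 0 < 2 * k by rewrite muln_gt0.
pose a0 : 'I_(2 * k) := Ordinal t0.
have [x hx] := LT_opt m a0.
pose sg := fun a : 'I_(2 * k) => nth (1%g : {perm 'I_k}) (enum S) a.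
have Hsg : forall a b, a != b -> LCS (perm_word (sg a)) (perm_word (sg b)) <= Lam.
  move=> a b ab; apply: leq_trans hL.
  have sz : size (enum S) = 2 * k by rewrite -cardE hS.
  apply: maxLCS_ge; rewrite /sg.
  - by rewrite -mem_enum mem_nth ?sz.
  - by rewrite -mem_enum mem_nth ?sz.
  by rewrite nth_uniq ?sz ?enum_uniq.
have y0 : 'I_k := Ordinal kpos.
have hc := compose a0 y0 Hsg kpos x.
have szw : size (take n (blockw sg x)) == n.
  rewrite size_takel // size_blockw size_tuple /m.
  rewrite {1}(divn_eq n k) mulnS mulnC addnC leq_add2r ltnW // ltn_mod.
  exact: kpos.
apply: leq_trans (LT_le (Tuple szw)) _.
apply: leq_trans (LTw_take y0 _ _) _.
apply: leq_trans hc _; rewrite size_tuple leq_add2l leq_mul2l hx orbT //.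
Qed.

Unset Implicit Arguments.
Local Open Scope ring_scope.

Lemma powR_third (R : realType) (x : R) : 0 <= x ->
  x `^ (3^-1) = x * x `^ (- (2 / 3)).
Proof.
move=> hx; have e : (3^-1 : R) = 1 + - (2 / 3) by field.
rewrite {1}e powRD ?powRr1 //.
apply/implyP => /eqP h; exfalso; move: h; lra.
Qed.

Lemma cube_b (R : realType) : (2 `^ (- (2 / 3)) : R) ^+ 3 = 4^-1.
Proof.
rewrite -powR_mulrn ?powR_ge0 // -powRrM.
have -> : (- (2 / 3) * 3%:R : R) = 1 *- 2 by rewrite -mulNrn mulr_natr; field.
by rewrite powR_invn // expr2 -natrM.
Qed.

Lemma cube_a (R : realType) : (3 `^ (3^-1) : R) ^+ 3 = 3.
Proof.
rewrite -powR_mulrn ?powR_ge0 // -powRrM.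
have -> : (3^-1 * 3%:R : R) = 1 by field.
by rewrite powRr1.
Qed.

Lemma b_bounds (R : realType) : 62/100 <= (2 `^ (- (2 / 3)) : R) <= 63/100.
Proof.
have := cube_b R; have := powR_gt0 (- (2/3)) (ltr0n R 2).
set b := 2 `^ _ => hb hc.
apply/andP; split.
  rewrite leNgt; apply/negP => h.
  have : b ^+ 3 < (62/100) ^+ 3.
    rewrite ltrXn2r //; lra.
  rewrite hc; lra.
rewrite leNgt; apply/negP => h.
have : (63/100) ^+ 3 < b ^+ 3 by rewrite ltrXn2r //; lra.
rewrite hc; lra.
Qed.

Lemma a_bound (R : realType) : (3 `^ (3^-1) : R) <= 145/100.
Proof.
have := cube_a R; have := powR_gt0 (3^-1) (ltr0n R 3).
set a := 3 `^ _ => ha hc.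
rewrite leNgt; apply/negP => h.
have : (145/100) ^+ 3 < a ^+ 3 by rewrite ltrXn2r //; lra.
rewrite hc; lra.
Qed.

Section Main.
Variable R : realType.
Variable C : R.
Hypothesis H : forall k : nat, (1 <= k)%N -> (2 * k <= k`!)%N ->
     (LCS2 (2 * k) k)%:R <= C * (k%:R `^ (3^-1)).

Definition u (K : nat) : R := C * K%:R `^ (- (2 / 3)).

Lemma C_ge1 : 1 <= C * 3 `^ (3^-1).
Proof.
apply: le_trans _ (H 3 isT (fact_2k (isT : (3 <= 3)%N))).
rewrite ler1n; apply: LCS2_ge1 => // S hS; apply: maxLCS_ge1 => //; by rewrite hS.
Qed.

Lemma C_ge0 : 0 <= C.
Proof.
have := C_ge1; have := powR_gt0 (3^-1) (ltr0n R 3); set a := 3 `^ _ => ha hc.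
rewrite leNgt; apply/negP => hC.
have : C * a < 0 by rewrite pmulr_llt0.
lra.
Qed.

Lemma u_ge0 K : 0 <= u K.
Proof. by rewrite /u mulr_ge0 ?C_ge0 ?powR_ge0. Qed.

Lemma u2 K : u (2 * K) <= 63/100 * u K.
Proof.
rewrite /u natrM powRM ?ler0n //.
have [_ hb] := andP (b_bounds R).
have h0 := powR_ge0 (K%:R : R) (- (2/3)).
have := C_ge0; set b := 2 `^ _; set y := K%:R `^ _ => hC.
rewrite mulrCA; apply: ler_wpM2r => //; exact: mulr_ge0.
Qed.

Lemma Lam_bound K : (3 <= K)%N -> (LCS2 (2 * K) K)%:R <= K%:R * u K.
Proof.
move=> hK; apply: le_trans (H K (leq_trans (isT : (1 <= 3)%N) hK) (fact_2k hK)) _.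
by rewrite powR_third ?ler0n // /u mulrCA.
Qed.

Lemma LT_rec_R K n : (3 <= K)%N ->
  (LT K n)%:R <= 2 * ((n %/ K).+1)%:R * (K%:R * u K) + K%:R * (LT (2 * K) (n %/ K).+1)%:R.
Proof.
move=> hK; have := LT_rec n hK; rewrite -(ler_nat R) natrD !natrM => h.
apply: le_trans h _; rewrite lerD2r; apply: ler_wpM2l; last exact: Lam_bound.
by rewrite mulr_ge0 ?ler0n.
Qed.


Lemma unif n K : (50 <= K)%N -> (LT K n)%:R <= 59/10 * u K * n%:R.
Proof.
elim/ltn_ind: n K => n IH K hK.
have hu := u_ge0 K.
have hn0 : (0 : R) <= n%:R by rewrite ler0n.
case: (leqP n K) => [nK|Kn].
  by rewrite LT_small // mulr_ge0 // mulr_ge0.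
have hK3 : (3 <= K)%N by apply: leq_trans hK.
have hr := LT_rec_R K n hK3.
set m := (n %/ K).+1 in hr.
have hq := leq_trunc_div n K.
have mK : (m * K <= n + K)%N by rewrite /m mulSn addnC leq_add2r.
have kR0 : (0 : R) <= K%:R by rewrite ler0n.
case: (ltnP n (2 * K * K)) => hn.
- have m2 : (m <= 2 * K)%N by rewrite /m; rewrite ltn_divLR //; apply: leq_trans hK.
  move: hr; rewrite (LT_small m2) mulr0n mulr0 addr0 => hr.
  have : (m * K <= 2 * n)%N by apply: leq_trans mK _; rewrite mul2n -addnn leq_add2l ltnW.
  rewrite -(ler_nat R) !natrM => hP.
  apply: le_trans hr _.
  have h2 : (m * K)%:R <= (2 * n)%:R :> R by rewrite ler_nat; apply: leq_trans mK _; rewrite mul2n -addnn leq_add2l ltnW.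
  rewrite !natrM in h2.
  have h3 := ler_wpM2l hu h2.
  have h4 := mulr_ge0 hu hn0.
  lra.
- have mn : (m < n)%N.
    have : ((n %/ K)%N * 50 <= n)%N by apply: leq_trans hq; rewrite leq_mul2l hK orbT.
    rewrite /m; move: Kn hK; generalize (n %/ K)%N => q; lia.
  have hm := IH m mn (2 * K)%N (leq_trans hK (leq_pmull K (isT : (0 < 2)%N))).
  have hu2 := u2 K.
  have hm0 : (0 : R) <= m%:R by rewrite ler0n.
  have hm' : (LT (2 * K) m)%:R <= 59/10 * (63/100 * u K) * m%:R.
    apply: le_trans hm _; apply: ler_wpM2r => //; apply: ler_wpM2l => //.
  have hP : (100 * (m * K) <= 101 * n)%N.
    have : (100 * K <= n)%N by move: hn hK; nia.
    move: mK; lia.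
  move: hP; rewrite -(ler_nat R) !natrM => hP.
  have h1 := ler_wpM2l kR0 hm'.
  have h2 : 0 <= u K * (101 * n%:R - 100 * (m%:R * K%:R)) by apply: mulr_ge0 => //; rewrite subr_ge0.
  apply: le_trans hr _.
  have h4 := mulr_ge0 hu hn0.
  lra.
Qed.


Lemma step K d : (3 <= K)%N ->
  (forall m, (LT (2 * K) m)%:R <= 59/10 * u (2 * K) * m%:R + d) ->
  forall n, (LT K n)%:R <= 59/10 * u K * n%:R + (6 * u K * K%:R + K%:R * d).
Proof.
move=> hK3 IH n.
have hu := u_ge0 K.
have hn0 : (0 : R) <= n%:R by rewrite ler0n.
have kR0 : (0 : R) <= K%:R by rewrite ler0n.
have hr := LT_rec_R K n hK3.
set m := (n %/ K).+1 in hr.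
have hq := leq_trunc_div n K.
have mK : (m * K <= n + K)%N by rewrite /m mulSn addnC leq_add2r.
have hm := IH m.
have hu2 := u2 K.
have hm0 : (0 : R) <= m%:R by rewrite ler0n.
have hm' : (LT (2 * K) m)%:R <= 59/10 * (63/100 * u K) * m%:R + d.
  apply: le_trans hm _; rewrite lerD2r; apply: ler_wpM2r => //; apply: ler_wpM2l => //.
move: mK; rewrite -(ler_nat R) natrD natrM => hP.
have h1 := ler_wpM2l kR0 hm'.
have h2 : 0 <= u K * (n%:R + K%:R - m%:R * K%:R) by apply: mulr_ge0 => //; rewrite subr_ge0.
have h4 := mulr_ge0 hu hn0.
have h5 := mulr_ge0 hu kR0.
apply: le_trans hr _.
lra.
Qed.

Lemma levels dd : forall K, (3 <= K)%N -> (50 <= 2 ^ dd * K)%N ->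
  exists d : R, forall n, (LT K n)%:R <= 59/10 * u K * n%:R + d.
Proof.
elim: dd => [|dd IH] K hK hd.
  by exists 0 => n; rewrite addr0; apply: unif; rewrite expn0 mul1n in hd.
case: (leqP 50 K) => hK50.
  by exists 0 => n; rewrite addr0; apply: unif.
have h50 : (50 <= 2 ^ dd * (2 * K))%N by rewrite mulnA -expnSr.
have [d hd'] := IH (2 * K)%N (leq_trans hK (leq_pmull K (isT : (0 < 2)%N))) h50.
by exists (6 * u K * K%:R + K%:R * d); apply: step.
Qed.

End Main.

Theorem theorem8' (R : realType) (C : R) :
  (forall k : nat, (1 <= k)%N -> (2 * k <= k`!)%N ->
     (LCS2 (2 * k) k)%:R <= C * (k%:R `^ (3^-1))) ->
  forall k : nat, (2 <= k)%N ->
  forall eps : R, 0 < eps ->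
  exists N : nat, forall n : nat, (N <= n)%N ->
    (LT k n)%:R <= 6 * C * (k%:R `^ (- (2 / 3))) * n%:R + eps * n%:R.
Proof.
move=> H k hk eps he.
have hC := @C_ge1 R C H.
have hC0 := @C_ge0 R C H.
case: k hk => [|[|[|k]]] // hk.
  exists 0%N => n _.
  have hn : (LT 2 n)%:R <= n%:R :> R by rewrite ler_nat LT_size.
  have [hb _] := andP (b_bounds R).
  have ha := a_bound R.
  have hn0 : (0 : R) <= n%:R by rewrite ler0n.
  set b := 2 `^ _ in hb *; set a := 3 `^ _ in ha hC.
  have ha0 : 0 <= a by rewrite powR_ge0.
  have e1 : 1 <= C * (145/100) by apply: le_trans hC _; apply: ler_wpM2l.
  have e2 : C * (62/100) <= C * b by apply: ler_wpM2l.
  have e3 : 0 <= (6 * C * b - 1) * n%:R by apply: mulr_ge0 => //; lra.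
  have e4 : 0 <= eps * n%:R by apply: mulr_ge0 => //; apply: ltW.
  lra.
have h50 : (50 <= 2 ^ 6 * k.+3)%N by rewrite -[(2 ^ 6)%N]/64%N; lia.
have [d hd] := @levels R C H 6 k.+3 isT h50.
have hx : 0 <= `|d| / eps by rewrite divr_ge0 // ltW.
exists (Num.Def.archi_bound (`|d| / eps)) => n hn.
have h1 := archi_boundP hx.
have h2 : `|d| / eps < n%:R by apply: lt_le_trans h1 _; rewrite ler_nat.
have h3 : `|d| < n%:R * eps by rewrite -ltr_pdivrMr.
have h4 := ler_norm d.
have := hd n; rewrite /u => h5.
have h6 : 0 <= C * k.+3%:R `^ (- (2 / 3)) * n%:R by rewrite !mulr_ge0 ?powR_ge0 ?ler0n.
lra.
Qed.


Unset Implicit Arguments.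
Theorem theorem8 (R : realType) (C : R) :
  (forall k : nat, (1 <= k)%N -> (2 * k <= k`!)%N ->
     (LCS2 (2 * k) k)%:R <= C * (k%:R `^ (3^-1))) ->
  forall k : nat, (2 <= k)%N ->
  forall eps : R, 0 < eps ->
  exists N : nat, forall n : nat, (N <= n)%N ->
    (LT k n)%:R <= 6 * C * (k%:R `^ (- (2 / 3))) * n%:R + eps * n%:R.
Proof. exact: theorem8'. Qed.
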